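(* Let $\sigma$ be a closed convex curve in $\mathbb R^2$ and suppose that, near $q=(0,0)\in\sigma$, $\sigma$ is the graph of a convex function $f$ with $f(0)=0$, such that $f'(0)=0$ and the one-sided derivatives $f'_\pm$ are differentiable at $0$ with derivative $A\ge0$ (so $f'_\pm(t)=At+o(t)$ as $t\to0$). Then the osculating curvature of $\sigma$ at $q$ exists and equals $A$.
   Context: For three points $p_1,p_2,p_3\in\mathbb R^2$ forming a triangle of area $\mathcal A$, $\chi_0(p_1,p_2,p_3)=\frac{4\mathcal A}{|p_1p_2||p_2p_3||p_3p_1|}$ (the curvature of the circle through them). The osculating curvature of $\sigma$ at $q$ is $\lim\chi_0(p,q,m)$ as $p,m\to q$ along $\sigma$ from opposite sides of $q$. *)

(* Defs.v *)
From Stdlib Require Import Reals.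
From Coquelicot Require Import Coquelicot.
Open Scope R_scope.

Definition pt := (R * R)%type.

Definition edist (p q : pt) : R :=
  sqrt ((fst p - fst q) ^ 2 + (snd p - snd q) ^ 2).

Definition tri_area (p1 p2 p3 : pt) : R :=
  Rabs ((fst p2 - fst p1) * (snd p3 - snd p1)
        - (fst p3 - fst p1) * (snd p2 - snd p1)) / 2.

Definition chi0 (p1 p2 p3 : pt) : R :=
  4 * tri_area p1 p2 p3 / (edist p1 p2 * edist p2 p3 * edist p3 p1).

Definition convex_set (K : pt -> Prop) : Prop :=
  forall p q (l : R), K p -> K q -> 0 <= l <= 1 ->
    K (l * fst p + (1 - l) * fst q, l * snd p + (1 - l) * snd q).

Definition bounded_set (K : pt -> Prop) : Prop :=
  exists M, forall p, K p -> Rabs (fst p) <= M /\ Rabs (snd p) <= M.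

Definition closed_set (K : pt -> Prop) : Prop :=
  forall p, ~ K p -> exists r, 0 < r /\ forall x, edist x p < r -> ~ K x.

Definition has_interior (K : pt -> Prop) : Prop :=
  exists c r, 0 < r /\ forall x, edist x c < r -> K x.

Definition boundary (K : pt -> Prop) (p : pt) : Prop :=
  forall e, 0 < e -> (exists x, edist x p < e /\ K x) /\
                     (exists x, edist x p < e /\ ~ K x).

Definition closed_convex_curve (sigma : pt -> Prop) : Prop :=
  exists K, convex_set K /\ bounded_set K /\ closed_set K /\ has_interior K /\
    forall p, sigma p <-> boundary K p.

Definition convex_on (a b : R) (f : R -> R) : Prop :=
  forall x y l, a < x < b -> a < y < b -> 0 <= l <= 1 ->
    f (l * x + (1 - l) * y) <= l * f x + (1 - l) * f y.

Definition right_deriv (f : R -> R) (x l : R) : Prop :=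
  filterlim (fun h => (f (x + h) - f x) / h) (at_right 0) (locally l).

Definition left_deriv (f : R -> R) (x l : R) : Prop :=
  filterlim (fun h => (f (x + h) - f x) / h) (at_left 0) (locally l).

(* Osculating curvature of sigma at q equals kappa: lim chi0(p,q,m) = kappa as
   p, m -> q along sigma from opposite sides of q; the two sides are given by
   the sign of the coordinate function [side] (with side q = 0). *)
Definition osculating_curvature_is (sigma : pt -> Prop) (side : pt -> R)
    (q : pt) (kappa : R) : Prop :=
  forall eps, 0 < eps -> exists eta, 0 < eta /\
    forall p m, sigma p -> sigma m -> edist p q < eta -> edist m q < eta ->
      side p < 0 -> 0 < side m -> Rabs (chi0 p q m - kappa) < eps.

(* Main.v *)
Require Import Defs.
From Stdlib Require Import Reals Lra Psatz.
From Coquelicot Require Import Coquelicot.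
Open Scope R_scope.

Lemma lim_le_gen (F : (R -> Prop) -> Prop) {FF : ProperFilter F} (phi : R -> R) l C :
  filterlim phi F (locally l) -> F (fun h => phi h <= C) -> l <= C.
Proof.
  intros Hl HC. destruct (Rle_dec l C) as [|Hn]; [assumption|].
  exfalso. assert (He : 0 < l - C) by lra.
  assert (Hb : F (fun h => ball l (mkposreal _ He) (phi h))).
  { apply Hl. apply locally_ball. }
  destruct (Hierarchy.filter_ex _ (filter_and _ _ HC Hb)) as [h [H1 H2]].
  change (Rabs (phi h - l) < l - C) in H2.
  apply Rabs_def2 in H2. lra.
Qed.

Lemma lim_ge_gen (F : (R -> Prop) -> Prop) {FF : ProperFilter F} (phi : R -> R) l C :
  filterlim phi F (locally l) -> F (fun h => C <= phi h) -> C <= l.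
Proof.
  intros Hl HC. destruct (Rle_dec C l) as [|Hn]; [assumption|].
  exfalso. assert (He : 0 < C - l) by lra.
  assert (Hb : F (fun h => ball l (mkposreal _ He) (phi h))).
  { apply Hl. apply locally_ball. }
  destruct (Hierarchy.filter_ex _ (filter_and _ _ HC Hb)) as [h [H1 H2]].
  change (Rabs (phi h - l) < C - l) in H2.
  apply Rabs_def2 in H2. lra.
Qed.

Lemma at_right_of (P : R -> Prop) d : 0 < d -> (forall h, 0 < h < d -> P h) -> at_right 0 P.
Proof.
  intros Hd H. exists (mkposreal _ Hd). intros y Hy Hy0.
  change (Rabs (y - 0) < d) in Hy. apply H. apply Rabs_def2 in Hy. lra.
Qed.

Lemma at_left_of (P : R -> Prop) d : 0 < d -> (forall h, - d < h < 0 -> P h) -> at_left 0 P.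
Proof.
  intros Hd H. exists (mkposreal _ Hd). intros y Hy Hy0.
  change (Rabs (y - 0) < d) in Hy. apply H. apply Rabs_def2 in Hy. lra.
Qed.

Lemma chord_lo f fp delta s t :
  convex_on (- delta) delta f -> - delta < s -> s < t -> t < delta ->
  right_deriv f s (fp s) -> fp s * (t - s) <= f t - f s.
Proof.
  intros Hc H1 H2 H3 Hd.
  assert (fp s <= (f t - f s) / (t - s)).
  { apply (lim_le_gen _ _ _ _ Hd). apply (at_right_of _ (t - s)); [lra|].
    intros h Hh. set (l := h / (t - s)).
    assert (Hl : 0 <= l <= 1).
    { unfold l; split. apply Rdiv_le_0_compat; lra.
      apply (Rmult_le_reg_r (t - s)); [lra|]. field_simplify; lra. }
    assert (E : s + h = l * t + (1 - l) * s) by (unfold l; field; lra).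
    pose proof (Hc t s l ltac:(lra) ltac:(lra) Hl) as Hcv. rewrite <- E in Hcv.
    assert (E2 : h = l * (t - s)) by (unfold l; field; lra).
    apply (Rmult_le_reg_r h); [lra|].
    unfold Rdiv. rewrite Rmult_assoc, Rinv_l by lra. rewrite E2 at 2.
    replace ((f t - f s) * / (t - s) * (l * (t - s))) with (l * (f t - f s))
      by (field; lra). lra. }
  apply (Rmult_le_reg_r (/ (t - s))). apply Rinv_0_lt_compat; lra.
  replace (fp s * (t - s) * / (t - s)) with (fp s) by (field; lra). exact H.
Qed.

Lemma chord_hi f fm delta s t :
  convex_on (- delta) delta f -> - delta < s -> s < t -> t < delta ->
  left_deriv f t (fm t) -> f t - f s <= fm t * (t - s).
Proof.
  intros Hc H1 H2 H3 Hd.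
  assert ((f t - f s) / (t - s) <= fm t).
  { apply (lim_ge_gen _ _ _ _ Hd). apply (at_left_of _ (t - s)); [lra|].
    intros h Hh. set (l := - h / (t - s)).
    assert (Hl : 0 <= l <= 1).
    { unfold l; split. apply Rdiv_le_0_compat; lra.
      apply (Rmult_le_reg_r (t - s)); [lra|]. field_simplify; lra. }
    assert (E : t + h = l * s + (1 - l) * t) by (unfold l; field; lra).
    pose proof (Hc s t l ltac:(lra) ltac:(lra) Hl) as Hcv. rewrite <- E in Hcv.
    assert (E2 : - h = l * (t - s)) by (unfold l; field; lra).
    assert (K : (f t - f s) / (t - s) * (- h) <= - (f (t + h) - f t)).
    { rewrite E2. replace ((f t - f s) / (t - s) * (l * (t - s))) with (l * (f t - f s))
      by (field; lra). lra. }
    replace ((f (t + h) - f t) / h) with (- (f (t + h) - f t) / (- h)) by (field; lra).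
    apply (Rmult_le_reg_r (- h)); [lra|].
    unfold Rdiv at 2. rewrite Rmult_assoc, Rinv_l by lra. lra. }
  apply (Rmult_le_reg_r (/ (t - s))). apply Rinv_0_lt_compat; lra.
  replace (fm t * (t - s) * / (t - s)) with (fm t) by (field; lra). exact H.
Qed.

Lemma small_le0 x : (forall e, 0 < e -> x <= e) -> x <= 0.
Proof. intros H. destruct (Rle_dec x 0); auto. specialize (H (x/2)). lra. Qed.

Lemma deriv_bound g A : is_derive g 0 A -> g 0 = 0 ->
  forall e, 0 < e -> exists eta, 0 < eta /\
    forall s, Rabs s < eta -> Rabs (g s - A * s) <= e * Rabs s.
Proof.
  intros Hd H0 e He. apply is_derive_Reals in Hd.
  destruct (Hd e He) as [d Hdd]. exists d. split; [apply cond_pos|].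
  intros s Hs. destruct (Req_dec s 0) as [->|Hn].
  { rewrite H0. replace (0 - A * 0) with 0 by ring. rewrite Rabs_R0. lra. }
  specialize (Hdd s Hn Hs). rewrite H0, Rplus_0_l in Hdd.
  replace (g s - A * s) with (((g s - 0) / s - A) * s) by (field; auto).
  rewrite Rabs_mult. apply Rmult_le_compat_r; [apply Rabs_pos|lra].
Qed.

(* core Riemann-sum estimate *)
Lemma core g d1 d2 A e eta : 0 < e -> e <= 1 -> 0 <= A -> 0 < eta -> g 0 = 0 ->
  (forall s t, 0 <= s -> s < t -> t < eta ->
     d1 s * (t - s) <= g t - g s <= d2 t * (t - s)) ->
  (forall s, 0 <= s < eta -> (A - e) * s <= d1 s /\ d2 s <= (A + e) * s) ->
  forall t, 0 < t < eta -> Rabs (g t - A * t ^ 2 / 2) <= e * t ^ 2.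
Proof.
  intros He He1 HA Heta Hg0 Hch Hd t Ht.
  assert (HAe : 0 < e / (A + 1)) by (apply Rdiv_lt_0_compat; lra).
  destruct (archimed_cor1 _ HAe) as [n [Hn Hn0]].
  assert (Hnp : 0 < INR n) by (apply lt_0_INR; lia).
  assert (Hn' : (A + 1) / INR n < e).
  { apply (Rmult_lt_reg_r (/ (A + 1))). apply Rinv_0_lt_compat; lra.
    replace ((A + 1) / INR n * / (A + 1)) with (/ INR n) by (field; lra). exact Hn. }
  set (h := t / INR n).
  assert (Hh : 0 < h) by (unfold h; apply Rdiv_lt_0_compat; lra).
  assert (Hnh : INR n * h = t) by (unfold h; field; lra).
  assert (Ind : forall k, (k <= n)%nat ->
     (A - e) * h ^ 2 * (INR k * (INR k - 1) / 2) <= g (INR k * h) <=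
     (A + e) * h ^ 2 * (INR k * (INR k + 1) / 2)).
  { induction k as [|k IH]; intros Hk.
    { change (INR 0) with 0. rewrite !Rmult_0_l. rewrite Hg0. lra. }
    assert (Hk' : (k <= n)%nat) by lia. specialize (IH Hk').
    assert (HkR : INR (S k) <= INR n) by (apply le_INR; lia).
    rewrite S_INR in HkR |- *.
    assert (Hk0 : 0 <= INR k) by apply pos_INR.
    assert (Hlt : (INR k + 1) * h < eta).
    { apply Rle_lt_trans with t; [|lra]. rewrite <- Hnh. apply Rmult_le_compat_r; lra. }
    destruct (Hch (INR k * h) ((INR k + 1) * h)) as [C1 C2]; try nra.
    destruct (Hd (INR k * h)) as [D1 _]. split; nra.
    destruct (Hd ((INR k + 1) * h)) as [_ D2]. split; nra.
    replace ((INR k + 1) * h - INR k * h) with h in C1, C2 by ring.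
    split; nra. }
  destruct (Ind n (le_n n)) as [L U]. rewrite Hnh in L, U.
  assert (E : forall c, c * h ^ 2 * (INR n * (INR n - 1) / 2) = c * t^2 / 2 - c * t ^ 2 / (2 * INR n)).
  { intros c. rewrite <- Hnh. field. lra. }
  assert (E' : forall c, c * h ^ 2 * (INR n * (INR n + 1) / 2) = c * t^2 / 2 + c * t ^ 2 / (2 * INR n)).
  { intros c. rewrite <- Hnh. field. lra. }
  rewrite E in L. rewrite E' in U.
  assert (Ht2 : 0 < t ^ 2) by nra.
  assert (B : (A + e) * t ^ 2 / (2 * INR n) <= e * t ^ 2 / 2).
  { replace ((A + e) * t ^ 2 / (2 * INR n)) with ((A + e) / INR n * (t ^ 2 / 2)) by (field; lra).
    replace (e * t ^ 2 / 2) with (e * (t ^ 2 / 2)) by field.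
    apply Rmult_le_compat_r; [nra|].
    apply Rle_trans with ((A + 1) / INR n); [|lra].
    unfold Rdiv; apply Rmult_le_compat_r; [left; apply Rinv_0_lt_compat; lra| lra]. }
  assert (B2 : (A - e) * t ^ 2 / (2 * INR n) <= (A + e) * t ^ 2 / (2 * INR n)).
  { unfold Rdiv. apply Rmult_le_compat_r; [left; apply Rinv_0_lt_compat; lra| nra]. }
  apply Rabs_le. split; nra.
Qed.

Lemma fp0 f l : is_derive f 0 0 -> right_deriv f 0 l -> l = 0.
Proof.
  intros Hd Hr. apply is_derive_Reals in Hd.
  apply Rle_antisym.
  - apply small_le0. intros e He. destruct (Hd e He) as [d Hdd].
    apply (lim_le_gen _ _ _ _ Hr). apply (at_right_of _ d); [apply cond_pos|].
    intros h Hh. assert (Hh0 : h <> 0) by lra.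
    assert (Ha : Rabs h < d) by (rewrite Rabs_pos_eq; lra).
    specialize (Hdd h Hh0 Ha). apply Rabs_def2 in Hdd. lra.
  - assert (- l <= 0); [|lra]. apply small_le0. intros e He. destruct (Hd e He) as [d Hdd].
    assert (e' : - e <= l); [|lra].
    apply (lim_ge_gen _ _ _ _ Hr). apply (at_right_of _ d); [apply cond_pos|].
    intros h Hh. assert (Hh0 : h <> 0) by lra.
    assert (Ha : Rabs h < d) by (rewrite Rabs_pos_eq; lra).
    specialize (Hdd h Hh0 Ha). apply Rabs_def2 in Hdd. lra.
Qed.

Lemma fm0 f l : is_derive f 0 0 -> left_deriv f 0 l -> l = 0.
Proof.
  intros Hd Hr. apply is_derive_Reals in Hd.
  apply Rle_antisym.
  - apply small_le0. intros e He. destruct (Hd e He) as [d Hdd].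
    apply (lim_le_gen _ _ _ _ Hr). apply (at_left_of _ d); [apply cond_pos|].
    intros h Hh. assert (Hh0 : h <> 0) by lra.
    assert (Ha : Rabs h < d) by (rewrite Rabs_left; lra).
    specialize (Hdd h Hh0 Ha). apply Rabs_def2 in Hdd. lra.
  - assert (- l <= 0); [|lra]. apply small_le0. intros e He. destruct (Hd e He) as [d Hdd].
    assert (e' : - e <= l); [|lra].
    apply (lim_ge_gen _ _ _ _ Hr). apply (at_left_of _ d); [apply cond_pos|].
    intros h Hh. assert (Hh0 : h <> 0) by lra.
    assert (Ha : Rabs h < d) by (rewrite Rabs_left; lra).
    specialize (Hdd h Hh0 Ha). apply Rabs_def2 in Hdd. lra.
Qed.

Lemma f_approx f fp fm delta A : 0 < delta ->
  convex_on (- delta) delta f -> f 0 = 0 -> is_derive f 0 0 ->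
  (forall x, - delta < x < delta -> right_deriv f x (fp x)) ->
  (forall x, - delta < x < delta -> left_deriv f x (fm x)) ->
  0 <= A -> is_derive fp 0 A -> is_derive fm 0 A ->
  forall e, 0 < e -> e <= 1 -> exists eta, 0 < eta /\ eta <= delta /\
    forall x, Rabs x < eta -> Rabs (f x - A * x ^ 2 / 2) <= e * x ^ 2.
Proof.
  intros Hdel Hc Hf0 Hd Hr Hl HA Hp Hm e He He1.
  assert (Hp0 : fp 0 = 0) by (apply (fp0 f); auto; apply Hr; lra).
  assert (Hm0 : fm 0 = 0) by (apply (fm0 f); auto; apply Hl; lra).
  destruct (deriv_bound fp A Hp Hp0 e He) as [e1 [He1p Hb1]].
  destruct (deriv_bound fm A Hm Hm0 e He) as [e2 [He2p Hb2]].
  set (eta := Rmin delta (Rmin e1 e2)).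
  assert (H1 : eta <= delta) by apply Rmin_l.
  assert (H2 : eta <= e1) by (eapply Rle_trans; [apply Rmin_r|apply Rmin_l]).
  assert (H3 : eta <= e2) by (eapply Rle_trans; [apply Rmin_r|apply Rmin_r]).
  assert (H0 : 0 < eta) by (unfold eta; repeat apply Rmin_pos; auto).
  exists eta. split; [auto|split; [auto|]].
  intros x Hx.
  destruct (Rtotal_order x 0) as [Hneg|[Hz|Hpos]].
  -
    pose proof (core (fun t => f (- t)) (fun s => - fm (- s)) (fun t => - fp (- t)) A e eta
      He He1 HA H0) as C.
    assert (Hx' : 0 < - x < eta) by (rewrite Rabs_left in Hx; lra).
    refine (_ (C _ _ _ (- x) Hx')).
    + intros K. replace (x ^ 2) with ((- x) ^ 2) by ring. rewrite Ropp_involutive in K. exact K.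
    + simpl. rewrite Ropp_0. exact Hf0.
    + intros s t Hs Hst Ht. simpl.
      pose proof (chord_lo f fp delta (- t) (- s) Hc ltac:(lra) ltac:(lra) ltac:(lra)
        (Hr (- t) ltac:(lra))).
      pose proof (chord_hi f fm delta (- t) (- s) Hc ltac:(lra) ltac:(lra) ltac:(lra)
        (Hl (- s) ltac:(lra))).
      split; nra.
    + intros s Hs. simpl.
      assert (Ha : Rabs (- s) < e1) by (rewrite Rabs_Ropp, Rabs_pos_eq; lra).
      assert (Hb : Rabs (- s) < e2) by (rewrite Rabs_Ropp, Rabs_pos_eq; lra).
      specialize (Hb1 _ Ha). specialize (Hb2 _ Hb).
      rewrite Rabs_Ropp, (Rabs_pos_eq s) in Hb1 by lra.
      rewrite Rabs_Ropp, (Rabs_pos_eq s) in Hb2 by lra.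
      apply Rabs_le_between in Hb1. apply Rabs_le_between in Hb2.
      split; nra.
  - subst x. rewrite Hf0. apply Rabs_le. simpl. split; nra.
  - assert (Hx' : 0 < x < eta) by (rewrite Rabs_pos_eq in Hx; lra).
    apply (core f fp fm A e eta He He1 HA H0 Hf0); auto.
    + intros s t Hs Hst Ht.
      pose proof (chord_lo f fp delta s t Hc ltac:(lra) ltac:(lra) ltac:(lra)
        (Hr s ltac:(lra))).
      pose proof (chord_hi f fm delta s t Hc ltac:(lra) ltac:(lra) ltac:(lra)
        (Hl t ltac:(lra))).
      split; lra.
    + intros s Hs.
      assert (Ha : Rabs s < e1) by (rewrite Rabs_pos_eq; lra).
      assert (Hb : Rabs s < e2) by (rewrite Rabs_pos_eq; lra).
      specialize (Hb1 _ Ha). specialize (Hb2 _ Hb).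
      rewrite (Rabs_pos_eq s) in Hb1 by lra.
      rewrite (Rabs_pos_eq s) in Hb2 by lra.
      apply Rabs_le_between in Hb1. apply Rabs_le_between in Hb2.
      split; nra.
Qed.

Lemma sqrt_ge w z : 0 <= w -> w * w <= z -> w <= sqrt z.
Proof. intros H1 H2. rewrite <- (sqrt_square w) by auto. apply sqrt_le_1_alt. auto. Qed.

Lemma sqrt_le' w z : 0 <= w -> z <= w * w -> sqrt z <= w.
Proof. intros H1 H2. rewrite <- (sqrt_square w) by auto. apply sqrt_le_1_alt. auto. Qed.

Lemma geom A e eta x y fx fy : 0 <= A -> 0 < e -> e <= 1/2 -> 0 < eta ->
  (A + 1) ^ 2 * eta ^ 2 <= 1 ->
  - eta < x -> x < 0 -> 0 < y -> y < eta ->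
  Rabs (fx - A * x ^ 2 / 2) <= e * x ^ 2 ->
  Rabs (fy - A * y ^ 2 / 2) <= e * y ^ 2 ->
  Rabs (chi0 (x, fx) (0, 0) (y, fy) - A) <= 2 * e + 11 * A * ((A + 1) ^ 2 * eta ^ 2).
Proof.
  intros HA He He2 Heta Hb Hx1 Hx2 Hy1 Hy2 Hu Hv.
  set (beta := (A + 1) ^ 2 * eta ^ 2) in *.
  assert (Hb0 : 0 <= beta) by (unfold beta; nra).
  apply Rabs_le_between in Hu. apply Rabs_le_between in Hv.
  set (L := (- x) * y * (y - x)).
  assert (HL : 0 < L) by (unfold L; apply Rmult_lt_0_compat; [nra|lra]).
  set (N := y * fx - x * fy).
  assert (HN1 : L * A - 2 * e * L <= 2 * N).
  { unfold L, N.
    assert (y * (fx - A * x ^ 2 / 2) >= y * (- (e * x ^ 2))) by (apply Rle_ge, Rmult_le_compat_l; lra).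
    assert ((- x) * (fy - A * y ^ 2 / 2) <= (- x) * (e * y ^ 2)) by (apply Rmult_le_compat_l; lra).
    nra. }
  assert (HN2 : 2 * N <= L * A + 2 * e * L).
  { unfold L, N.
    assert (y * (fx - A * x ^ 2 / 2) <= y * (e * x ^ 2)) by (apply Rmult_le_compat_l; lra).
    assert ((- x) * (fy - A * y ^ 2 / 2) >= (- x) * (- (e * y ^ 2))) by (apply Rle_ge, Rmult_le_compat_l; lra).
    nra. }
  assert (HAN1 : L * (A - 2 * e) <= 2 * Rabs N).
  { unfold Rabs; destruct (Rcase_abs N); nra. }
  assert (HAN2 : 2 * Rabs N <= L * (A + 2 * e)).
  { unfold Rabs; destruct (Rcase_abs N); nra. }
  assert (Hfx : Rabs fx <= (A + 1) * eta * (- x)).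
  { apply Rabs_le. assert (x ^ 2 <= eta * (- x)) by nra. split; nra. }
  assert (Hfy : Rabs fy <= (A + 1) * eta * y).
  { apply Rabs_le. assert (y ^ 2 <= eta * y) by nra. split; nra. }
  assert (Hfxy : Rabs (fy - fx) <= 2 * (A + 1) * eta * (y - x)).
  { assert (Rabs (fy - fx) <= Rabs fy + Rabs fx).
    { unfold Rminus. eapply Rle_trans. apply Rabs_triang. rewrite Rabs_Ropp. lra. }
    assert (0 <= (A + 1) * eta * (y - x)) by (apply Rmult_le_pos; nra).
    lra. }
  set (P := edist (x, fx) (0, 0)). set (Q := edist (0, 0) (y, fy)). set (M := edist (y, fy) (x, fx)).
  assert (HP : - x <= P <= - x * (1 + beta)).
  { unfold P, edist; simpl. split.
    - apply sqrt_ge; nra.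
    - apply sqrt_le'; [nra|]. assert (fx ^ 2 <= beta * x ^ 2).
      { replace (fx ^ 2) with (Rabs fx * Rabs fx) by (unfold Rabs; destruct (Rcase_abs fx); ring).
        unfold beta. assert (0 <= Rabs fx) by apply Rabs_pos. nra. }
      nra. }
  assert (HQ : y <= Q <= y * (1 + beta)).
  { unfold Q, edist; simpl. split.
    - apply sqrt_ge; nra.
    - apply sqrt_le'; [nra|]. assert (fy ^ 2 <= beta * y ^ 2).
      { replace (fy ^ 2) with (Rabs fy * Rabs fy) by (unfold Rabs; destruct (Rcase_abs fy); ring).
        unfold beta. assert (0 <= Rabs fy) by apply Rabs_pos. nra. }
      nra. }
  assert (HM : y - x <= M <= (y - x) * (1 + 2 * beta)).
  { unfold M, edist; simpl. split.
    - apply sqrt_ge. lra. pose proof (Rle_0_sqr (fy - fx)); unfold Rsqr in *; lra.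
    - apply sqrt_le'; [nra|]. assert ((fy - fx) ^ 2 <= 4 * beta * (y - x) ^ 2).
      { replace ((fy - fx) ^ 2) with (Rabs (fy - fx) * Rabs (fy - fx))
          by (unfold Rabs; destruct (Rcase_abs (fy - fx)); ring).
        unfold beta. assert (0 <= Rabs (fy - fx)) by apply Rabs_pos.
        assert (0 <= 2 * (A + 1) * eta * (y - x)) by (apply Rmult_le_pos; nra).
        assert (Rabs (fy - fx) * Rabs (fy - fx) <= (2 * (A + 1) * eta * (y - x)) * (2 * (A + 1) * eta * (y - x)))
          by (apply Rmult_le_compat; lra).
        nra. }
      nra. }
  set (D := P * Q * M).
  assert (HD1 : L <= D).
  { unfold D, L. apply Rmult_le_compat; try nra. }
  assert (HD0 : 0 < D) by lra.
  set (th := (1 + beta) * (1 + beta) * (1 + 2 * beta) - 1).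
  assert (HD2 : D <= L * (1 + th)).
  { unfold D, L, th. replace (- x * y * (y - x) * (1 + ((1 + beta) * (1 + beta) * (1 + 2 * beta) - 1)))
      with ((- x * (1 + beta)) * (y * (1 + beta)) * ((y - x) * (1 + 2 * beta))) by ring.
    apply Rmult_le_compat; try nra.
    all: try (apply Rmult_le_compat; nra). }
  assert (Hth0 : 0 <= th) by (unfold th; nra).
  assert (Hth : th <= 11 * beta) by (unfold th; nra).
  assert (Hchi : chi0 (x, fx) (0, 0) (y, fy) = 2 * Rabs N / D).
  { unfold chi0, tri_area. change (edist (x, fx) (0, 0) * edist (0, 0) (y, fy) * edist (y, fy) (x, fx)) with D.
    cbn [fst snd]. unfold N.
    replace ((0 - x) * (fy - fx) - (y - x) * (0 - fx)) with (y * fx - x * fy) by ring.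
    field. lra. }
  rewrite Hchi. set (c := 2 * Rabs N / D).
  assert (Hc : c * D = 2 * Rabs N) by (unfold c; field; lra).
  assert (Hc0 : 0 <= c) by (unfold c; apply Rdiv_le_0_compat; [pose proof (Rabs_pos N)|]; lra).
  assert (U : c <= A + 2 * e).
  { apply (Rmult_le_reg_r D); [lra|]. rewrite Hc. nra. }
  assert (Lo : A - 2 * e - A * th <= c).
  { destruct (Rle_dec (A - 2 * e - A * th) 0) as [Hneg|Hpos]; [lra|].
    apply (Rmult_le_reg_r D); [lra|]. rewrite Hc.
    apply Rle_trans with ((A - 2 * e - A * th) * (L * (1 + th))).
    apply Rmult_le_compat_l; lra.
    assert ((A - 2 * e - A * th) * (L * (1 + th)) <= L * (A - 2 * e)); [|lra].
    assert (0 <= L * th * (2 * e + A * th)) by (apply Rmult_le_pos; nra).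
    nra. }
  apply Rabs_le. split; nra.
Qed.

Lemma abs_le_edist x z : Rabs x <= edist (x, z) (0, 0).
Proof.
  unfold edist; cbn [fst snd]. apply sqrt_ge. apply Rabs_pos.
  replace (Rabs x * Rabs x) with (x * x) by (unfold Rabs; destruct (Rcase_abs x); ring).
  pose proof (Rle_0_sqr z). unfold Rsqr in *. lra.
Qed.

Theorem proposition7p1
  (sigma : pt -> Prop) (f fp fm : R -> R) (delta r A : R) :
  closed_convex_curve sigma ->
  0 < delta -> 0 < r ->
  (* near q = (0,0), sigma is the graph of f over (-delta, delta) *)
  (forall p, edist p (0, 0) < r ->
     (sigma p <-> (- delta < fst p < delta /\ snd p = f (fst p)))) ->
  convex_on (- delta) delta f ->
  f 0 = 0 ->
  is_derive f 0 0 ->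
  (* fp, fm are the one-sided derivatives f'_+, f'_- on (-delta, delta) *)
  (forall x, - delta < x < delta -> right_deriv f x (fp x)) ->
  (forall x, - delta < x < delta -> left_deriv f x (fm x)) ->
  0 <= A ->
  is_derive fp 0 A -> is_derive fm 0 A ->
  osculating_curvature_is sigma fst (0, 0) A.
Proof.
  intros _ Hdel Hr Hsig Hc Hf0 Hd Hrd Hld HA Hp Hm eps Heps.
  set (e := Rmin (1/2) (eps / 4)).
  assert (He0 : 0 < e) by (unfold e; apply Rmin_pos; lra).
  assert (He1 : e <= 1/2) by apply Rmin_l.
  assert (He2 : e <= eps / 4) by apply Rmin_r.
  destruct (f_approx f fp fm delta A Hdel Hc Hf0 Hd Hrd Hld HA Hp Hm e He0 ltac:(lra))
    as [ef [Hef0 [Hefd Hef]]].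
  set (s := Rmin 1 (eps / (44 * (A + 1)))).
  assert (Hs0 : 0 < s) by (unfold s; apply Rmin_pos; [lra|apply Rdiv_lt_0_compat; lra]).
  assert (Hs1 : s <= 1) by apply Rmin_l.
  assert (Hs2 : s <= eps / (44 * (A + 1))) by apply Rmin_r.
  set (eta := Rmin (Rmin r ef) (s / (A + 1))).
  assert (Heta0 : 0 < eta) by (unfold eta; repeat apply Rmin_pos; try lra; apply Rdiv_lt_0_compat; lra).
  assert (Heta1 : eta <= r) by (unfold eta; eapply Rle_trans; [apply Rmin_l|apply Rmin_l]).
  assert (Heta2 : eta <= ef) by (unfold eta; eapply Rle_trans; [apply Rmin_l|apply Rmin_r]).
  assert (Heta3 : eta <= s / (A + 1)) by (unfold eta; apply Rmin_r).
  assert (Hae : (A + 1) * eta <= s).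
  { apply Rle_trans with ((A + 1) * (s / (A + 1))). apply Rmult_le_compat_l; lra.
    right; field; lra. }
  assert (Hbeta : (A + 1) ^ 2 * eta ^ 2 <= s).
  { assert (0 <= (A + 1) * eta) by (apply Rmult_le_pos; lra).
    replace ((A + 1) ^ 2 * eta ^ 2) with (((A + 1) * eta) * ((A + 1) * eta)) by ring. nra. }
  assert (H11 : 11 * A * s <= eps / 4).
  { apply Rle_trans with (11 * A * (eps / (44 * (A + 1)))).
    apply Rmult_le_compat_l; nra.
    replace (11 * A * (eps / (44 * (A + 1)))) with ((eps / 4) * (A / (A + 1))) by (field; lra).
    replace (eps / 4) with ((eps / 4) * 1) at 2 by ring.
    apply Rmult_le_compat_l; [lra|]. apply (Rmult_le_reg_r (A + 1)); [lra|].
    replace (A / (A + 1) * (A + 1)) with A by (field; lra). lra. }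
  exists eta. split; [exact Heta0|].
  intros [x fx] [y fy] Hsp Hsm Hpq Hmq Hs1' Hs2'. cbn [fst] in Hs1', Hs2'.
  assert (Hx : Rabs x < eta) by (eapply Rle_lt_trans; [apply abs_le_edist|exact Hpq]).
  assert (Hy : Rabs y < eta) by (eapply Rle_lt_trans; [apply abs_le_edist|exact Hmq]).
  destruct (proj1 (Hsig (x, fx) ltac:(lra)) Hsp) as [_ Efx]. cbn [fst snd] in Efx.
  destruct (proj1 (Hsig (y, fy) ltac:(lra)) Hsm) as [_ Efy]. cbn [fst snd] in Efy.
  subst fx fy.
  rewrite Rabs_left in Hx by lra. rewrite Rabs_pos_eq in Hy by lra.
  assert (Hfx : Rabs (f x - A * x ^ 2 / 2) <= e * x ^ 2).
  { apply Hef. rewrite Rabs_left by lra. lra. }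
  assert (Hfy : Rabs (f y - A * y ^ 2 / 2) <= e * y ^ 2).
  { apply Hef. rewrite Rabs_pos_eq by lra. lra. }
  pose proof (geom A e eta x y (f x) (f y) HA He0 He1 Heta0 ltac:(lra) ltac:(lra) Hs1' Hs2'
     ltac:(lra) Hfx Hfy) as G.
  eapply Rle_lt_trans. exact G.
  assert (11 * A * ((A + 1) ^ 2 * eta ^ 2) <= 11 * A * s) by (apply Rmult_le_compat_l; nra).
  lra.
Qed.
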